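(* For every $\mu \in \mathcal{X}$ and every probability distribution $P_X$ on $\mathcal{X}$, $D(\mu ; P_X) \in [0, 2]$. Moreover, with $X_1, X_2 \sim P_X$ independent: (i) $D(\mu ; P_X) = 0$ if and only if $P_X(\{\mu\}) = 0$ and $P ( L[X_1, X_2, \mu] \cup L[X_2, X_1, \mu] ) = 1$; (ii) $D(\mu ; P_X) = 2$ if and only if $P_X(\{\mu\}) = 0$ and $P( L[X_1, \mu, X_2] ) = 1$.
   Context: $(\mathcal{X}, d)$ is a complete separable metric space with its Borel $\sigma$-algebra. Define $h: \mathcal{X}^3 \to \mathbb{R}$ by $h(x_1, x_2, x_3) := \mathbb{I}( x_3 \notin \{x_1, x_2\} ) \dfrac{ d^2(x_1, x_3) + d^2(x_2, x_3) - d^2(x_1, x_2) }{d(x_1, x_3)\, d(x_2, x_3) }$, where $h := 0$ when $x_3 \in \{x_1,x_2\}$. The metric spatial depth of $\mu \in \mathcal{X}$ with respect to a probability distribution $P_X$ on $\mathcal{X}$ is $D(\mu; P_X) := 1 - \frac{1}{2} \mathrm{E} \{ h(X_1, X_2, \mu) \}$, where $X_1, X_2 \sim P_X$ are independent. For $x_1,x_2,x_3\in\mathcal{X}$, $L[x_1, x_2, x_3]$ denotes the event (condition) that $d(x_1, x_3) = d(x_1, x_2) + d(x_2, x_3)$, i.e. the three points lie on a metric line with $x_2$ between $x_1$ and $x_3$. *)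

(* Defs.v *)
From HB Require Import structures.
From mathcomp Require Import all_boot all_order all_algebra.
From mathcomp Require Import all_classical all_reals all_analysis.
Set Implicit Arguments. Unset Strict Implicit. Unset Printing Implicit Defensive.
Import Order.TTheory GRing.Theory Num.Theory.
Local Open Scope classical_set_scope.
Local Open Scope ring_scope.

Section MetricDefs.
Context {R : realType} {T : Type} (dist : T -> T -> R).

Definition is_metric : Prop :=
  [/\ (forall x y, 0 <= dist x y),
      (forall x y, dist x y = 0 <-> x = y),
      (forall x y, dist x y = dist y x) &
      (forall x y z, dist x z <= dist x y + dist y z)].

Definition metric_open (A : set T) : Prop :=
  forall x, A x -> exists e : R, 0 < e /\ (forall y, dist x y < e -> A y).

Definition metric_complete : Prop :=
  forall u : nat -> T,
    (forall e : R, 0 < e -> exists N, forall m n, (N <= m)%N -> (N <= n)%N ->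
        dist (u m) (u n) < e) ->
    exists l, forall e : R, 0 < e -> exists N, forall n, (N <= n)%N -> dist (u n) l < e.

Definition metric_separable : Prop :=
  exists D : set T, countable D /\
    forall x (e : R), 0 < e -> exists y, D y /\ dist x y < e.

Definition Lmet (x1 x2 x3 : T) : Prop := dist x1 x3 = dist x1 x2 + dist x2 x3.

Definition hker (x1 x2 x3 : T) : R :=
  if `[< x3 = x1 \/ x3 = x2 >] then 0
  else (dist x1 x3 ^+ 2 + dist x2 x3 ^+ 2 - dist x1 x2 ^+ 2)
       / (dist x1 x3 * dist x2 x3).
End MetricDefs.

Definition metric_borel {R : realType} {d : measure_display} {T : measurableType d}
  (dist : T -> T -> R) : Prop :=
  forall A : set T, measurable A <-> <<s [set B | metric_open dist B] >> A.

Definition msdepth {R : realType} {d : measure_display} {T : measurableType d}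
  (dist : T -> T -> R) (P : probability T R) (mu : T) : \bar R :=
  (1%:E - (2^-1)%:E * \int[(P \x P)%E]_z (hker dist z.1 z.2 mu)%:E)%E.

(* Main.v *)
Require Import Defs.
From HB Require Import structures.
From mathcomp Require Import all_boot all_order all_algebra.
From mathcomp Require Import all_classical all_reals all_analysis.
From mathcomp Require Import lra measurable_realfun.
Import Order.TTheory GRing.Theory Num.Theory.
Local Open Scope classical_set_scope.
Local Open Scope ring_scope.

Lemma real2 (R : realFieldType) (a b c : R) : 0 < a -> 0 < b -> a <= c + b -> b <= c + a ->
  c <= a + b -> 0 <= c ->
  let h := (a ^+ 2 + b ^+ 2 - c ^+ 2) / (a * b) in
  [/\ -2 <= h <= 2, (h = 2 <-> a = c + b \/ b = c + a) & (h = -2 <-> c = a + b)].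
Proof.
move=> a0 b0 t1 t2 t3 c0 h.
have p0 : 0 < a * b by rewrite mulr_gt0.
have hp : h * (a * b) = a ^+ 2 + b ^+ 2 - c ^+ 2 by rewrite /h divfK // gt_eqF.
have e2 : h = 2 <-> h * (a * b) = 2 * (a * b).
  by split => [->//|/(mulIf (lt0r_neq0 p0))].
have em2 : h = -2 <-> h * (a * b) = -2 * (a * b).
  by split => [->//|/(mulIf (lt0r_neq0 p0))].
split.
- rewrite -(ler_pM2r p0) hp -[X in _ && X](ler_pM2r p0) hp; apply/andP; split; nra.
- apply: (iff_trans e2); rewrite hp.
  split => [e|[e|e]]; last 2 first.
  + rewrite e; nra.
  + rewrite e; nra.
  have : (c - a + b) * (c + a - b) = 0 by nra.
  by move/eqP; rewrite mulf_eq0 => /orP[/eqP|/eqP] ?; [left|right]; lra.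
- apply: (iff_trans em2); rewrite hp.
  split => [e|e]; last by rewrite e; nra.
  have : (a + b - c) * (a + b + c) = 0 by nra.
  by move/eqP; rewrite mulf_eq0 => /orP[/eqP|/eqP] ?; lra.
Qed.

Section S.
Context (R : realType) (d : measure_display) (T : measurableType d)
  (dist : T -> T -> R).
Hypothesis Hmetric : is_metric dist.
Hypothesis Hsep : metric_separable dist.
Hypothesis Hborel : metric_borel dist.

Let d0 x y : 0 <= dist x y. Proof. by case: Hmetric. Qed.
Let dE x y : dist x y = 0 <-> x = y. Proof. by case: Hmetric. Qed.
Let dC x y : dist x y = dist y x. Proof. by case: Hmetric. Qed.
Let dT x y z : dist x z <= dist x y + dist y z. Proof. by case: Hmetric. Qed.

Lemma open_meas (A : set T) : metric_open dist A -> measurable A.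
Proof. by move=> oA; apply/Hborel; apply: sub_sigma_algebra. Qed.

Lemma ball_meas (x : T) r : measurable [set y | dist x y < r].
Proof.
apply: open_meas => y /= xy; exists (r - dist x y); split; first by rewrite subr_gt0.
move=> z yz; have := dT x y z; lra.
Qed.

Lemma set1_meas (x : T) : measurable [set x].
Proof.
rewrite -[X in measurable X]setCK; apply: measurableC; apply: open_meas.
move=> y /= yx; exists (dist y x); split.
  by rewrite lt_neqAle d0 andbT eq_sym; apply/eqP => /dE.
by move=> z yz zx; subst z; rewrite ltxx in yz.
Qed.


Lemma dist_meas : measurable_fun setT (fun z : T * T => dist z.1 z.2).
Proof.
apply: (measurability _ (RGenInftyO.measurableE R)) => //.
move=> _ [_ [r ->] <-]; rewrite setTI.
have [DD [cD dD]] := Hsep.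
pose U := {q : T | DD q}.
pose F (u : U) (n : nat) := [set x | dist (sval u) x < n.+1%:R^-1] `*`
   [set y | dist (sval u) y < r - n.+1%:R^-1].
suff -> : (fun z : T * T => dist z.1 z.2) @^-1` `]-oo, r[%classic =
    \bigcup_(u : U) \bigcup_n F u n.
  apply: countable_bigcupT_measurable.
    move/countable_injP: cD => [f finj]; apply/countable_injP.
    exists (f \o sval) => -[a Da] [b Db] _ _ /= e.
    have ab : a = b by apply: finj => //; rewrite inE.
    by subst b; congr exist; exact: Prop_irrelevance.
  move=> u; apply: bigcupT_measurable => n; apply: measurableX; exact: ball_meas.
apply/seteqP; split => [[x y]|[x y]].
  rewrite /= in_itv /= => xy.
  set e := r - dist x y.
  have e0 : 0 < e by rewrite subr_gt0.
  set n := Num.bound (2 / e).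
  have hn : 2 / e < n.+1%:R.
    apply: (lt_le_trans (archi_boundP _)); first by rewrite divr_ge0 // ltW.
    by rewrite ler_nat.
  have hi : n.+1%:R^-1 < e / 2.
    rewrite -[e / 2]invf_div ltf_pV2 // posrE // divr_gt0 //.
  have [q [Dq xq]] := dD x (n.+1%:R^-1) ltac:(by rewrite invr_gt0).
  exists (exist _ q Dq) => //; exists n => //; split => /=.
    by rewrite dC.
  change (dist q y < r - n.+1%:R^-1).
  have := dT q x y; rewrite (dC q x); rewrite /e in hi.
  move: (n.+1%:R^-1) hi xq => t hi xq H; lra.
move=> [u _ [n _ [/= h1 h2]]].
rewrite /= in_itv /=; have := dT x (sval u) y; rewrite (dC x (sval u)).
move: (n.+1%:R^-1) h1 h2 => t h1 h2 H; lra.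
Qed.


Lemma inv_meas : measurable_fun [set: R] (@GRing.inv R).
Proof.
have -> : [set: R] = [set x | x != 0] `|` [set 0].
  by apply/seteqP; split => x // _; case: (eqVneq x 0) => [->|h]; [right|left].
have mN : measurable [set x : R | x != 0].
  rewrite (_ : [set x | x != 0] = ~` [set 0]).
    by apply: measurableC; exact: measurable_set1.
  by apply/seteqP; split => x /= /eqP.
apply/(measurable_funU _ mN (measurable_set1 0)).
split; last exact: measurable_fun_set1.
apply: open_continuous_measurable_fun; first exact: open_neq.
move=> x /set_mem /= xn0; exact: inv_continuous.
Qed.

Variable mu : T.
Let a (z : T * T) := dist z.1 mu.
Let b (z : T * T) := dist z.2 mu.
Let c (z : T * T) := dist z.1 z.2.

Let ma : measurable_fun setT a.
Proof.
have -> : a = (fun z => dist z.1 z.2) \o (fun z => (z.1, mu)) by [].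
apply: measurableT_comp; first exact: dist_meas.
apply: measurable_fun_pair => //; exact: measurable_fst.
Qed.

Let mb : measurable_fun setT b.
Proof.
have -> : b = (fun z => dist z.1 z.2) \o (fun z => (z.2, mu)) by [].
apply: measurableT_comp; first exact: dist_meas.
apply: measurable_fun_pair => //; exact: measurable_snd.
Qed.

Let mc : measurable_fun setT c. Proof. exact: dist_meas. Qed.

Lemma hkerE z : hker dist z.1 z.2 mu = (a z ^+ 2 + b z ^+ 2 - c z ^+ 2) / (a z * b z).
Proof.
rewrite /hker /a /b /c; case: asboolP => [[e|e]|//].
- by rewrite -e (proj2 (dE mu mu) erefl) mul0r invr0 mulr0.
- by rewrite -e (proj2 (dE mu mu) erefl) mulr0 invr0 mulr0.
Qed.

Lemma hker_meas : measurable_fun setT (fun z : T * T => hker dist z.1 z.2 mu).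
Proof.
rewrite (_ : (fun z => _) = fun z => (a z ^+ 2 + b z ^+ 2 - c z ^+ 2) * (a z * b z)^-1);
  last by apply/funext => z; rewrite hkerE.
apply: measurable_funM.
  apply: measurable_funB; last exact: measurable_funX.
  apply: measurable_funD; exact: measurable_funX.
apply: (measurableT_comp inv_meas); exact: measurable_funM.
Qed.


Let h z := hker dist z.1 z.2 mu.

Lemma hpt z : [/\ -2 <= h z <= 2,
  (h z = 2 <-> (z.1 <> mu /\ z.2 <> mu) /\
      (Lmet dist z.1 z.2 mu \/ Lmet dist z.2 z.1 mu)) &
  (h z = -2 <-> (z.1 <> mu /\ z.2 <> mu) /\ Lmet dist z.1 mu z.2)].
Proof.
rewrite /h hkerE.
case: (eqVneq (a z) 0) => [a0|a0].
  rewrite a0 mul0r invr0 mulr0; split; first by apply/andP; split; lra.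
    by split => [H|[[H _] _]]; [exfalso; lra|exfalso; apply: H; apply/dE].
  by split => [H|[[H _] _]]; [exfalso; lra|exfalso; apply: H; apply/dE].
case: (eqVneq (b z) 0) => [b0|b0].
  rewrite b0 mulr0 invr0 mulr0; split; first by apply/andP; split; lra.
    by split => [H|[[_ H] _]]; [exfalso; lra|exfalso; apply: H; apply/dE].
  by split => [H|[[_ H] _]]; [exfalso; lra|exfalso; apply: H; apply/dE].
have n1 : z.1 <> mu by move=> e; move: a0; rewrite /a e (proj2 (dE mu mu) erefl) eqxx.
have n2 : z.2 <> mu by move=> e; move: b0; rewrite /b e (proj2 (dE mu mu) erefl) eqxx.
have ap : 0 < a z by rewrite lt_neqAle eq_sym a0 d0.
have bp : 0 < b z by rewrite lt_neqAle eq_sym b0 d0.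
have t1 : a z <= c z + b z.
  rewrite /a /b /c. exact: (dT z.1 z.2 mu).
have t2 : b z <= c z + a z by rewrite /a /b /c (dC z.1 z.2); exact: (dT z.2 z.1 mu).
have t3 : c z <= a z + b z by rewrite /a /b /c (dC z.2 mu); exact: (dT z.1 mu z.2).
have [H1 H2 H3] := @real2 R _ _ _ ap bp t1 t2 t3 (d0 _ _).
split => //.
- apply: (iff_trans H2); rewrite /Lmet -/(a z) -/(b z) -/(c z) (dC z.2 z.1) -/(c z).
  by split => [H|[_ H]]; [split|].
- apply: (iff_trans H3); rewrite /Lmet -/(a z) -/(c z) (dC mu z.2) -/(b z).
  by split => [H|[_ H]]; [split|].
Qed.


Variable P : probability T R.
Let Q := (P \x P)%E.

Local Open Scope ereal_scope.

Let QT : Q setT = 1.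
Proof. by rewrite /Q -setXTT product_measure1E // -[RHS]mule1; congr (_ * _); exact: probability_setT. Qed.

Let E1 : [set z : T * T | z.1 = mu] = [set mu] `*` setT.
Proof. by apply/seteqP; split => [[x y] /= e|[x y] [/= e _]]. Qed.

Let E2 : [set z : T * T | z.2 = mu] = setT `*` [set mu].
Proof. by apply/seteqP; split => [[x y] /= e|[x y] [_ /= e]]. Qed.

Let m1 : measurable [set z : T * T | z.1 = mu].
Proof.
rewrite E1.
by apply: measurableX => //; exact: set1_meas.
Qed.

Let m2 : measurable [set z : T * T | z.2 = mu].
Proof.
rewrite E2.
by apply: measurableX => //; exact: set1_meas.
Qed.

Let Q1 : Q [set z | z.1 = mu] = P [set mu].
Proof.
rewrite E1.
rewrite /Q product_measure1E //; last exact: set1_meas.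
by rewrite -[RHS]mule1; congr (_ * _); exact: probability_setT.
Qed.

Let Q2 : Q [set z | z.2 = mu] = P [set mu].
Proof.
rewrite E2.
rewrite /Q product_measure1E //; last exact: set1_meas.
by rewrite -[RHS]mul1e; congr (_ * _); exact: probability_setT.
Qed.

Let Qle1 A : measurable A -> Q A <= 1.
Proof. by move=> mA; rewrite -QT; apply: le_measure => //; rewrite inE. Qed.

Let QC A : measurable A -> Q (~` A) = 1 - Q A.
Proof.
move=> mA; have U := measureU Q mA (measurableC mA) (setICr A).
have : Q A + Q (~` A) = 1.
  transitivity (Q (A `|` ~` A)); first exact/esym/U.
  by rewrite setUv; exact: QT.
move=> <-.
have : Q A \is a fin_num by rewrite ge0_fin_numE // (le_lt_trans (Qle1 _ mA)) // ltry.
by move=> fA; rewrite addeC addeK.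
Qed.

Lemma key (g : T * T -> R) (S : set (T * T)) : measurable S ->
  measurable_fun setT g -> (forall z, (0 <= g z)%R) ->
  (forall z, g z = 0%R <-> (z.1 <> mu /\ z.2 <> mu) /\ S z) ->
  \int[Q]_z (g z)%:E = 0 <-> P [set mu] = 0 /\ Q S = 1.
Proof.
move=> mS mg g0 gE.
have mEg : measurable_fun setT (EFin \o g) by exact/measurable_EFinP.
have -> : \int[Q]_z (g z)%:E = \int[Q]_z `|(EFin \o g) z|.
  apply: eq_integral => z _ /=; first by rewrite ger0_norm.
rewrite ae_eq_integral_abs //; split.
  case=> N [mN N0 sub].
  have nN z : ~ N z -> g z = 0%R.
    move=> nz; apply: contrapT => gz; apply: nz; apply: sub => H; apply: gz.
    by have := H I; case.
  split.
    apply/eqP; rewrite eq_le measure_ge0 andbT -Q1 -N0.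
    apply: le_measure; rewrite ?inE //.
    by move=> z /= e; apply: sub => /= /(_ I) [] /gE [[n1 _] _].
  apply/eqP; rewrite eq_le Qle1 //= -[leLHS]sube0 -N0 -QC //.
  apply: le_measure; rewrite ?inE //; first exact: measurableC.
  by move=> z /nN /gE [].
move=> [P0 QS].
exists ([set z | z.1 = mu] `|` [set z | z.2 = mu] `|` ~` S); split.
- by apply: measurableU; [exact: measurableU|exact: measurableC].
- apply/eqP; rewrite eq_le measure_ge0 andbT.
  apply: (le_trans (measureU2 _ _ _)); [exact: measurableU|exact: measurableC|].
  apply: le_trans (leeD (measureU2 _ m1 m2) (lexx _)) _.
  have z1 : Q [set z | z.1 = mu] <= 0 by rewrite Q1 P0.
  have z2 : Q [set z | z.2 = mu] <= 0 by rewrite Q2 P0.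
  have z3 : Q (~` S) <= 0 by rewrite QC // QS subee.
  by apply: le_trans (leeD (leeD z1 z2) z3) _; rewrite !adde0.
- move=> z /= nz; apply: contrapT => hz; apply: nz => _.
  apply: (congr1 EFin); apply/gE; split; last by apply: contrapT => Sz; apply: hz; right.
  by split => e; apply: hz; left; [left|right].
Qed.


Lemma meas_eq (f g : T * T -> R) : measurable_fun setT f -> measurable_fun setT g ->
  measurable [set z | f z = g z].
Proof.
move=> mf mg; have := measurable_fun_eqr mf mg measurableT (Y := [set true]) I.
rewrite setTI; congr measurable; apply/seteqP; split => z /=; first by move/eqP.
by move=> ->; rewrite eqxx.
Qed.

Let hbd : [bounded h z | z in setT].
Proof.
exists 2%R; split => // M M2 z _ /=.
have [/andP[h1 h2] _ _] := hpt z.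
rewrite ler_norml; apply/andP; split; lra.
Qed.

Let hint : Q.-integrable setT (EFin \o h).
Proof.
apply: measurable_bounded_integrable => //; first by apply: (le_lt_trans (Qle1 _ measurableT)); rewrite ltry.
exact: hker_meas.
Qed.

Let cint : Q.-integrable setT (EFin \o (fun _ : T * T => 2%R)).
Proof.
apply: measurable_bounded_integrable => //; first by apply: (le_lt_trans (Qle1 _ measurableT)); rewrite ltry.
exists 2%R; split => // M M2 z _ /=; rewrite ger0_norm //; lra.
Qed.

Let c2 : \int[Q]_z (2%R)%:E = 2%:E.
Proof. by rewrite integral_cst // -[RHS]mule1; congr (_ * _); exact: QT. Qed.

Theorem main_sec :
  [/\ (0 <= msdepth dist P mu <= 2%:E)%E,
      (msdepth dist P mu = 0%E <->
         P [set mu] = 0%E /\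
         (P \x P)%E [set z | Lmet dist z.1 z.2 mu \/ Lmet dist z.2 z.1 mu] = 1%E) &
      (msdepth dist P mu = 2%:E <->
         P [set mu] = 0%E /\
         (P \x P)%E [set z | Lmet dist z.1 mu z.2] = 1%E)].
Proof.
set I := \int[Q]_z (h z)%:E.
have -> : msdepth dist P mu = 1%:E - (2^-1)%:E * I by [].
have fI : I \is a fin_num by exact: (integrable_fin_num measurableT hint).
set r := fine I.
have rI : I = r%:E by rewrite fineK.
rewrite rI -EFinM -EFinB.
have J2 : \int[Q]_z (2 - h z)%:E = (2 - r)%:E.
  under eq_integral do rewrite EFinB.
  by rewrite (integralB_EFin measurableT cint hint) c2 EFinB; congr (_ - _); exact: rI.
have J3 : \int[Q]_z (h z + 2)%:E = (r + 2)%:E.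
  under eq_integral do rewrite EFinD.
  by rewrite (integralD_EFin measurableT hint cint) c2 [RHS]EFinD; congr (_ + _); exact: rI.
have g2 z : (0 <= 2 - h z)%R by have [/andP[h1 h2] _ _] := hpt z; lra.
have g3 z : (0 <= h z + 2)%R by have [/andP[h1 h2] _ _] := hpt z; lra.
have r2 : (r <= 2)%R.
  by rewrite -subr_ge0 -lee_fin -J2; apply: integral_ge0 => z _; rewrite lee_fin.
have r3 : (-2 <= r)%R.
  by rewrite -(subr_ge0 (-2)) opprK -lee_fin -J3; apply: integral_ge0 => z _; rewrite lee_fin.
have mh : measurable_fun setT h by exact: hker_meas.
split.
- rewrite !lee_fin; apply/andP; split; lra.
- have -> : ((1 - 2^-1 * r)%:E = 0) <-> \int[Q]_z (2 - h z)%:E = 0.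
    rewrite J2; split => [[e]|[e]]; congr EFin; lra.
  apply: key.
  + have -> : [set z : T * T | Lmet dist z.1 z.2 mu \/ Lmet dist z.2 z.1 mu] =
        [set z | a z = (c z + b z)%R] `|` [set z | b z = (c z + a z)%R].
      apply/seteqP; split => z [e|e]; [left|right|left|right] => //;
        move: e; rewrite /Lmet /a /b /c (dC z.2 z.1) //.
    apply: measurableU; apply: meas_eq => //; exact: measurable_funD.
  + by apply: measurable_funB.
  + exact: g2.
  + move=> z; have [_ H _] := hpt z; apply: iff_trans H; split => e; lra.
- have -> : ((1 - 2^-1 * r)%:E = 2%:E) <-> \int[Q]_z (h z + 2)%:E = 0.
    rewrite J3; split => [[e]|[e]]; congr EFin; lra.
  apply: key.
  + have -> : [set z : T * T | Lmet dist z.1 mu z.2] = [set z | c z = (a z + b z)%R].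
      apply/seteqP; split => z e; move: e; rewrite /Lmet /a /b /c /= (dC mu z.2) //.
    apply: meas_eq => //; exact: measurable_funD.
  + by apply: measurable_funD.
  + exact: g3.
  + move=> z; have [_ _ H] := hpt z; apply: iff_trans H; split => e; lra.
Qed.

End S.

Theorem theorem3 (R : realType) (d : measure_display) (T : measurableType d)
  (dist : T -> T -> R)
  (Hmetric : is_metric dist) (Hcomplete : metric_complete dist)
  (Hsep : metric_separable dist) (Hborel : metric_borel dist)
  (P : probability T R) (mu : T) :
  [/\ (0 <= msdepth dist P mu <= 2%:E)%E,
      (msdepth dist P mu = 0%E <->
         P [set mu] = 0%E /\
         (P \x P)%E [set z | Lmet dist z.1 z.2 mu \/ Lmet dist z.2 z.1 mu] = 1%E) &
      (msdepth dist P mu = 2%:E <->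
         P [set mu] = 0%E /\
         (P \x P)%E [set z | Lmet dist z.1 mu z.2] = 1%E)].
Proof. exact: (@main_sec R d T dist Hmetric Hsep Hborel mu P). Qed.
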